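(* Let $\mathcal{C}$ be a category and $A$ an object of $\mathcal{C}$ satisfying the axioms RC0, RC1, RC2 below. Then every arrow $x\colon A\to X$ in $\mathcal{C}$ is a quotient of $A$ by the subgroup $H=\mathrm{Fix}(x)=\{h\in \mathrm{Aut}(A): x\circ h=x\}$; that is, the quotient $q\colon A\to A/H$ exists and the unique arrow $\varepsilon\colon A/H\to X$ with $\varepsilon\circ q=x$ is an isomorphism.
   Context: An arrow $f\colon X\to Y$ is a strict epimorphism if for every arrow $g\colon X\to Z$ which is compatible with $f$ (meaning: for every object $C$ and all $u,v\colon C\to X$ with $f\circ u=f\circ v$ one has $g\circ u=g\circ v$) there is a unique $k\colon Y\to Z$ with $g=k\circ f$. If $H$ is a group acting on an object $A$ by automorphisms (a group homomorphism $H\to \mathrm{Aut}(A)^{op}$; write $h$ also for the corresponding automorphism), the quotient $q\colon A\to A/H$ is an arrow with $q\circ h=q$ for all $h\in H$ which is universal: every $x\colon A\to X$ with $x\circ h=x$ for all $h\in H$ factors uniquely as $x=\varphi\circ q$. Write $[A,X]$ for the hom-set. Axioms: RC0: for every object $X$ there exists an arrow $A\to X$, and every arrow $A\to X$ is a strict epimorphism. RC1: for every subgroup $H\subseteq\mathrm{Aut}(A)$ the quotient $q\colon A\to A/H$ exists and is preserved by $[A,-]$, i.e. the map $[A,A]\to[A,A/H]$, $f\mapsto q\circ f$, is surjective and $q\circ f=q\circ g$ holds iff $f=h\circ g$ for some $h\in H$. RC2: every endomorphism of $A$ is an automorphism, $[A,A]=\mathrm{Aut}(A)$. *)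

(* Defs.v *)
Set Implicit Arguments.
Unset Strict Implicit.

Record Category := {
  Ob : Type;
  Hom : Ob -> Ob -> Type;
  idm : forall X, Hom X X;
  comp : forall X Y Z, Hom Y Z -> Hom X Y -> Hom X Z;
  comp_assoc : forall X Y Z W (f : Hom Z W) (g : Hom Y Z) (h : Hom X Y),
      comp f (comp g h) = comp (comp f g) h;
  comp_id_l : forall X Y (f : Hom X Y), comp (idm Y) f = f;
  comp_id_r : forall X Y (f : Hom X Y), comp f (idm X) = f
}.

Arguments Hom : clear implicits.
Arguments idm {c} X.
Arguments comp {c X Y Z} _ _.

Section Defs.
Variable C : Category.

Definition is_iso (X Y : Ob C) (f : Hom C X Y) : Prop :=
  exists g : Hom C Y X, comp g f = idm X /\ comp f g = idm Y.

Definition compatible (X Y Z : Ob C) (f : Hom C X Y) (g : Hom C X Z) : Prop :=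
  forall (D : Ob C) (u v : Hom C D X), comp f u = comp f v -> comp g u = comp g v.

Definition strict_epi (X Y : Ob C) (f : Hom C X Y) : Prop :=
  forall (Z : Ob C) (g : Hom C X Z), compatible f g ->
    exists k : Hom C Y Z, g = comp k f /\
      forall k' : Hom C Y Z, g = comp k' f -> k' = k.

Definition subgroup_Aut (A : Ob C) (H : Hom C A A -> Prop) : Prop :=
  H (idm A) /\
  (forall h1 h2, H h1 -> H h2 -> H (comp h1 h2)) /\
  (forall h, H h -> exists h', H h' /\ comp h' h = idm A /\ comp h h' = idm A).

Definition is_quotient (A Q : Ob C) (H : Hom C A A -> Prop) (q : Hom C A Q) : Prop :=
  (forall h, H h -> comp q h = q) /\
  forall (X : Ob C) (x : Hom C A X), (forall h, H h -> comp x h = x) ->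
    exists phi : Hom C Q X, x = comp phi q /\
      forall phi' : Hom C Q X, x = comp phi' q -> phi' = phi.

Definition RC0 (A : Ob C) : Prop :=
  forall X : Ob C, (exists f : Hom C A X, True) /\
                   (forall f : Hom C A X, strict_epi f).

Definition RC1 (A : Ob C) : Prop :=
  forall H : Hom C A A -> Prop, subgroup_Aut H ->
    exists (Q : Ob C) (q : Hom C A Q),
      is_quotient H q /\
      (forall g : Hom C A Q, exists f : Hom C A A, g = comp q f) /\
      (forall f g : Hom C A A, comp q f = comp q g <-> exists h, H h /\ f = comp h g).

Definition RC2 (A : Ob C) : Prop :=
  forall f : Hom C A A, is_iso f.

Definition Fix (A X : Ob C) (x : Hom C A X) : Hom C A A -> Prop :=
  fun h => is_iso h /\ comp x h = x.

End Defs.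

(* Main.v *)
Require Import Defs.

Lemma strict_epi_epi {C : Category} {X Y Z : Ob C} {f : Hom C X Y} :
  strict_epi f -> forall k1 k2 : Hom C Y Z, comp k1 f = comp k2 f -> k1 = k2.
Proof.
  intros Hs k1 k2 E.
  destruct (Hs Z (comp k1 f)) as [k [Hk Hu]].
  - intros D u v Euv. rewrite <- !comp_assoc, Euv. reflexivity.
  - rewrite (Hu k1 eq_refl). symmetry. apply Hu. exact E.
Qed.

Theorem proposition2p8 (C : Category) (A : Ob C) :
  RC0 A -> RC1 A -> RC2 A ->
  forall (X : Ob C) (x : Hom C A X),
    (exists (Q : Ob C) (q : Hom C A Q), is_quotient (Fix x) q) /\
    (forall (Q : Ob C) (q : Hom C A Q), is_quotient (Fix x) q ->
       forall eps : Hom C Q X, comp eps q = x -> is_iso eps).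
Proof.
  intros H0 H1 H2 X x. split.
  - assert (Hsub : subgroup_Aut (Fix x)).
    { split; [|split].
      + split. exists (idm A). rewrite comp_id_l. auto. apply comp_id_r.
      + intros h1 h2 [[g1 [a1 b1]] e1] [[g2 [a2 b2]] e2]. split.
        * exists (comp g2 g1). split.
          -- rewrite comp_assoc, <- (comp_assoc g2 g1 h1), a1, comp_id_r; exact a2.
          -- rewrite comp_assoc, <- (comp_assoc h1 h2 g2), b2, comp_id_r; exact b1.
        * rewrite comp_assoc, e1; exact e2.
      + intros h [[g [a b]] e]. exists g. split; [split|split; assumption].
        * exists h. split; assumption.
        * transitivity (comp (comp x h) g); [rewrite e; reflexivity|]. rewrite <- comp_assoc, b, comp_id_r. reflexivity. }
    destruct (H1 _ Hsub) as [Q [q [Hq _]]]. exists Q, q. exact Hq.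
  - intros Q q [Hinv Huniv] eps Eeps.
    assert (Hcomp : compatible x q).
    { intros D u v Euv.
      destruct (proj1 (H0 D)) as [a _].
      apply (strict_epi_epi (proj2 (H0 D) a)).
      destruct (H2 (comp v a)) as [g' [ga gb]].
      assert (Hh : Fix x (comp (comp u a) g')).
      { split. apply H2.
        rewrite comp_assoc, (comp_assoc x u a), Euv, <- (comp_assoc x v a),
          <- comp_assoc, gb, comp_id_r. reflexivity. }
      assert (Ef : comp u a = comp (comp (comp u a) g') (comp v a)).
      { rewrite <- (comp_assoc (comp u a) g'), ga, comp_id_r. reflexivity. }
      rewrite <- !comp_assoc, Ef, comp_assoc, Hinv by exact Hh. reflexivity. }
    destruct (proj2 (H0 X) x Q q Hcomp) as [k [Hk _]].
    exists k. split.
    + destruct (Huniv Q q Hinv) as [phi [_ Hphi]].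
      rewrite (Hphi (idm Q)) by (symmetry; apply comp_id_l).
      apply Hphi. rewrite <- comp_assoc, Eeps. exact Hk.
    + apply (strict_epi_epi (proj2 (H0 X) x)).
      rewrite <- comp_assoc, <- Hk, Eeps, comp_id_l. reflexivity.
Qed.
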